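(* Let $\mathbf X\in\mathbb R^{m\times n}$, let $\mathbf Y\in\mathbb R^{q\times n}$ satisfy $\mathbf Y^T\mathbf Y=\mathbf I_n$, and let $\lambda>0$. If $\widehat{\mathbf B}$ is the optimal solution of $\min_{\mathbf B\in\mathbb R^{m\times q}}\{\frac12\|\mathbf X-\mathbf B\mathbf Y\|_F^2+\lambda\|\mathbf B\|_*\}$ and $\widehat{\mathbf S}$ is the optimal solution of $\min_{\mathbf S\in\mathbb R^{m\times n}}\{\frac12\|\mathbf X-\mathbf S\|_F^2+\lambda\|\mathbf S\|_*\}$, then $\widehat{\mathbf S}=\widehat{\mathbf B}\mathbf Y$.
   Context: $\|\cdot\|_*$ is the nuclear norm (sum of singular values), $\|\cdot\|_F$ the Frobenius norm. *)

(* Defs.v *)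
From HB Require Import structures.
From mathcomp Require Import all_boot all_order all_algebra.
From mathcomp Require Import boolp classical_sets reals.
Set Implicit Arguments. Unset Strict Implicit. Unset Printing Implicit Defensive.
Import Order.TTheory GRing.Theory Num.Theory.
Local Open Scope ring_scope.

Definition frob_norm (R : realType) (m n : nat) (A : 'M[R]_(m, n)) : R :=
  Num.sqrt (\sum_(i < m) \sum_(j < n) A i j ^+ 2).

(* The eigenvalues (with multiplicity) of the symmetric PSD matrix A^T A:
   a sequence s with char_poly (A^T A) = prod_(r <- s) (X - r).  Such a
   sequence exists (spectral theorem) and is unique up to permutation;
   it is selected by classical choice. *)
Definition gram_eigenvalues (R : realType) (m n : nat) (A : 'M[R]_(m, n)) : seq R :=
  xget [::] (fun s : seq R => char_poly (A^T *m A) = \prod_(r <- s) ('X - r%:P)).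

(* Singular values of A: square roots of the eigenvalues of A^T A
   (the extra zero singular values do not affect the sum). *)
Definition singular_values (R : realType) (m n : nat) (A : 'M[R]_(m, n)) : seq R :=
  [seq Num.sqrt r | r <- gram_eigenvalues A].

Definition nuc_norm (R : realType) (m n : nat) (A : 'M[R]_(m, n)) : R :=
  \sum_(s <- singular_values A) s.

Definition is_minimizer (T : Type) (R : realType) (f : T -> R) (x : T) : Prop :=
  forall y : T, f x <= f y.

(* Main.v *)
Require Import Defs.
From HB Require Import structures.
From mathcomp Require Import all_boot all_order all_algebra.
From mathcomp Require Import boolp classical_sets reals.
From mathcomp Require Import complex.
From mathcomp Require Import ring lra.
Import Order.TTheory GRing.Theory Num.Theory.
Set Implicit Arguments. Unset Strict Implicit. Unset Printing Implicit Defensive.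
Local Open Scope ring_scope.
Section Lin.
Variable R : realType.
Implicit Types m n k : nat.

Definition sqm m n (A : 'M[R]_(m, n)) := \sum_i \sum_j A i j ^+ 2.
Definition ip m n (A B : 'M[R]_(m, n)) := \sum_i \sum_j A i j * B i j.
Definition contr m n (Q : 'M[R]_(m, n)) := forall x : 'cV[R]_n, sqm (Q *m x) <= sqm x.

Lemma sum_lin3 m n (F1 F2 F3 F4 : 'I_m -> 'I_n -> R) a b c :
  (forall i j, F1 i j = a * F2 i j + b * F3 i j + c * F4 i j) ->
  \sum_i \sum_j F1 i j =
    a * \sum_i \sum_j F2 i j + b * \sum_i \sum_j F3 i j + c * \sum_i \sum_j F4 i j.
Proof.
move=> H.
have inner i : \sum_j F1 i j =
    a * \sum_j F2 i j + b * \sum_j F3 i j + c * \sum_j F4 i j.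
  by rewrite !mulr_sumr -!big_split; apply: eq_bigr => j _; rewrite H.
by rewrite !mulr_sumr -!big_split; apply: eq_bigr => i _; rewrite inner.
Qed.

Lemma ipE m n (A B : 'M[R]_(m, n)) : ip A B = \tr (A^T *m B).
Proof.
rewrite /ip /mxtrace exchange_big; apply: eq_bigr => j _; rewrite mxE.
by apply: eq_bigr => i _; rewrite mxE.
Qed.

Lemma sqmE m n (A : 'M[R]_(m, n)) : sqm A = ip A A.
Proof. by rewrite /sqm /ip; apply: eq_bigr => i _; apply: eq_bigr => j _; rewrite expr2. Qed.

Lemma sqm_ge0 m n (A : 'M[R]_(m, n)) : 0 <= sqm A.
Proof. by apply: sumr_ge0 => i _; apply: sumr_ge0 => j _; apply: sqr_ge0. Qed.

Lemma sqm_eq0 m n (A : 'M[R]_(m, n)) : sqm A = 0 -> A = 0.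
Proof.
move=> /eqP; rewrite psumr_eq0; last by move=> i _; apply: sumr_ge0 => j _; apply: sqr_ge0.
move=> /allP H; apply/matrixP => i j; rewrite mxE.
have := H i (mem_index_enum _); rewrite implyTb.
rewrite psumr_eq0; last by move=> l _; apply: sqr_ge0.
by move=> /allP /(_ j (mem_index_enum _)); rewrite implyTb sqrf_eq0 => /eqP.
Qed.

Lemma ip_mulr m k n (Q : 'M[R]_(m, n)) (A : 'M[R]_(m, k)) (M : 'M[R]_(k, n)) :
  ip Q (A *m M) = ip (Q *m M^T) A.
Proof. by rewrite !ipE trmx_mul trmxK mulmxA mxtrace_mulC mulmxA. Qed.

Lemma ipDr m n (A B C : 'M[R]_(m, n)) : ip A (B + C) = ip A B + ip A C.
Proof. by rewrite !ipE mulmxDr mxtraceD. Qed.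

Lemma ipZr m n (A B : 'M[R]_(m, n)) c : ip A (c *: B) = c * ip A B.
Proof. by rewrite !ipE -scalemxAr mxtraceZ. Qed.

Lemma ip_col m n (A B : 'M[R]_(m, n)) : ip A B = \sum_j ip (col j A) (col j B).
Proof.
rewrite /ip exchange_big; apply: eq_bigr => j _.
by apply: eq_bigr => i _; rewrite big_ord1 !mxE.
Qed.

Lemma sqm_trE m n (A : 'M[R]_(m, n)) : sqm A = \tr (A^T *m A).
Proof. by rewrite sqmE ipE. Qed.

Lemma diag_sqm m n (M : 'M[R]_(m, n)) i : (M^T *m M) i i = sqm (col i M).
Proof.
rewrite /sqm mxE; apply: eq_bigr => k _; rewrite big_ord1 !mxE expr2 //.
Qed.

Lemma ip_bound m (u w : 'cV[R]_m) s d :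
  sqm u <= s -> sqm w = d * s -> 0 <= d -> ip u w <= Num.sqrt d * s.
Proof.
move=> hu hw d0.
have s0 : 0 <= s by apply: le_trans hu; apply: sqm_ge0.
have [dz|dn0] := eqVneq d 0.
  move: hw; rewrite dz mul0r => /sqm_eq0 ->.
  by rewrite sqrtr0 mul0r /ip big1 // => i _; rewrite big1 // => j _; rewrite mxE mulr0.
set t := Num.sqrt d.
have t0 : 0 < t by rewrite sqrtr_gt0 lt_neqAle eq_sym dn0.
have dt : d = t ^+ 2 by rewrite sqr_sqrtr.
have key : 0 <= sqm (t *: u - w).
  exact: sqm_ge0.
have exp : sqm (t *: u - w) = t ^+ 2 * sqm u + (- (2 * t)) * ip u w + 1 * sqm w.
  apply: sum_lin3 => i j; rewrite !mxE; ring.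
rewrite exp hw dt in key.
have h1 : t ^+ 2 * sqm u <= t ^+ 2 * s by apply: ler_wpM2l => //; apply: sqr_ge0.
nra.
Qed.

End Lin.

Lemma col_mulmx (R : realType) m k n (Q : 'M[R]_(m, k)) (X : 'M[R]_(k, n)) i :
  col i (Q *m X) = Q *m col i X.
Proof. by rewrite !colE mulmxA. Qed.

Section Dual.
Variables (R : realType) (m n : nat) (A : 'M[R]_(m, n)) (Pr Pi : 'M[R]_n) (d : 'rV[R]_n).
Let G := A^T *m A.
Hypotheses (HPr : G *m Pr = Pr *m diag_mx d) (HPi : G *m Pi = Pi *m diag_mx d)
  (H1 : Pr *m Pr^T + Pi *m Pi^T = 1%:M) (H2 : Pr^T *m Pr + Pi^T *m Pi = 1%:M).

Lemma Gsym : G^T = G.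
Proof. by rewrite /G trmx_mul trmxK. Qed.

Lemma quadX (X : 'M[R]_n) : G *m X = X *m diag_mx d ->
  forall i, sqm (col i (A *m X)) = d 0 i * (X^T *m X) i i.
Proof.
move=> HX i; rewrite -diag_sqm trmx_mul -mulmxA (mulmxA A^T) -/G HX mulmxA.
by rewrite mul_mx_diag mxE mulrC.
Qed.

Lemma diagH2 i : (Pr^T *m Pr) i i + (Pi^T *m Pi) i i = 1.
Proof. by have := congr1 (fun M : 'M[R]_n => M i i) H2; rewrite /= !mxE eqxx. Qed.

Lemma d_ge0 i : 0 <= d 0 i.
Proof.
have -> : d 0 i = sqm (col i (A *m Pr)) + sqm (col i (A *m Pi)).
  by rewrite !quadX // -mulrDr diagH2 mulr1.
by apply: addr_ge0; apply: sqm_ge0.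
Qed.

Lemma colbound (Q : 'M[R]_(m, n)) (X : 'M[R]_n) : contr Q -> G *m X = X *m diag_mx d ->
  ip (Q *m X) (A *m X) <= \sum_i Num.sqrt (d 0 i) * (X^T *m X) i i.
Proof.
move=> cQ HX; rewrite ip_col; apply: ler_sum => i _.
rewrite !col_mulmx; apply: ip_bound; last exact: d_ge0.
  by rewrite diag_sqm; apply: cQ.
by rewrite -col_mulmx quadX.
Qed.

Lemma dual_le (Q : 'M[R]_(m, n)) : contr Q -> ip Q A <= \sum_i Num.sqrt (d 0 i).
Proof.
move=> cQ.
have -> : ip Q A = ip (Q *m Pr) (A *m Pr) + ip (Q *m Pi) (A *m Pi).
  rewrite -[in LHS](mulmx1 A) -H1 mulmxDr !mulmxA ipDr !ip_mulr !trmxK //.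
have -> : \sum_i Num.sqrt (d 0 i) = \sum_i Num.sqrt (d 0 i) * (Pr^T *m Pr) i i
    + \sum_i Num.sqrt (d 0 i) * (Pi^T *m Pi) i i.
  by rewrite -big_split; apply: eq_bigr => i _; rewrite /= -mulrDr diagH2 mulr1.
by apply: lerD; apply: colbound.
Qed.


Definition ev := \row_i (if 0 < d 0 i then (Num.sqrt (d 0 i))^-1 else 0).
Let E := diag_mx ev.

Lemma comm_XY (X Y : 'M[R]_n) : G *m X = X *m diag_mx d -> G *m Y = Y *m diag_mx d ->
  (X^T *m Y) *m E = E *m (X^T *m Y).
Proof.
move=> HX HY.
have MD : (X^T *m Y) *m diag_mx d = diag_mx d *m (X^T *m Y).
  rewrite -mulmxA -HY mulmxA -[G]Gsym -trmx_mul HX trmx_mul tr_diag_mx mulmxA //.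
move: (X^T *m Y) MD => M MD.
apply/matrixP => j k; rewrite mul_mx_diag mul_diag_mx !mxE.
have := congr1 (fun M : 'M[R]_n => M j k) MD.
rewrite /= mul_mx_diag mul_diag_mx !mxE => e.
have [djk|djk] := eqVneq (d 0 j) (d 0 k).
  by rewrite djk mulrC.
suff -> : M j k = 0 by rewrite mulr0 mul0r.
have : (d 0 k - d 0 j) * M j k = 0 by rewrite mulrBl mulrC e subrr.
by move/eqP; rewrite mulf_eq0 subr_eq0 eq_sym (negPf djk) => /eqP.
Qed.

Let H := Pr *m E *m Pr^T + Pi *m E *m Pi^T.

Lemma HX (X : 'M[R]_n) : G *m X = X *m diag_mx d -> H *m X = X *m E.
Proof.
move=> HXd.
rewrite /H mulmxDl -!mulmxA -!comm_XY // !mulmxA -!mulmxDl H1 mul1mx //.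
Qed.

Lemma Hsym : H^T = H.
Proof. by rewrite /H linearD /= !trmx_mul !trmxK /E tr_diag_mx !mulmxA. Qed.

Lemma ev_d i : ev 0 i * d 0 i = Num.sqrt (d 0 i).
Proof.
rewrite mxE; case: ifP => dpos.
  rewrite -{2}(sqr_sqrtr (d_ge0 i)) expr2 mulrA mulVf ?mul1r //.
  by rewrite gt_eqF // sqrtr_gt0.
have -> : d 0 i = 0 by apply/eqP; rewrite eq_le d_ge0 andbT leNgt dpos.
by rewrite sqrtr0 mul0r.
Qed.

Lemma ev_d_ev i : 0 <= ev 0 i * d 0 i * ev 0 i <= 1.
Proof.
rewrite ev_d mxE; case: ifP => dpos; last by rewrite mulr0 lexx ler01.
by rewrite mulfV ?ler01 ?lexx // gt_eqF // sqrtr_gt0.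
Qed.

Lemma GD : G = Pr *m diag_mx d *m Pr^T + Pi *m diag_mx d *m Pi^T.
Proof. by rewrite -[LHS]mulmx1 -H1 mulmxDr !mulmxA HPr HPi. Qed.

Lemma HG : H *m G = Pr *m (E *m diag_mx d) *m Pr^T + Pi *m (E *m diag_mx d) *m Pi^T.
Proof. by rewrite {1}GD mulmxDr !mulmxA !HX // !mulmxA. Qed.

Lemma weighted (y : 'cV[R]_n) (f : 'rV[R]_n) : (forall i, 0 <= f 0 i <= 1) ->
  \tr (y^T *m diag_mx f *m y) <= sqm y.
Proof.
move=> hf; rewrite /mxtrace big_ord1 /sqm mxE; apply: ler_sum => k _.
rewrite big_ord1 mul_mx_diag !mxE expr2 -mulrA mulrCA.
have /andP[f0 f1] := hf k.
nra.
Qed.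

Lemma dual_att : exists Q : 'M[R]_(m, n), contr Q /\ ip Q A = \sum_i Num.sqrt (d 0 i).
Proof.
exists (A *m H); split.
  move=> x.
  have PrH : Pr^T *m H = E *m Pr^T.
    by rewrite -Hsym -trmx_mul HX // trmx_mul /E tr_diag_mx.
  have PiH : Pi^T *m H = E *m Pi^T.
    by rewrite -Hsym -trmx_mul HX // trmx_mul /E tr_diag_mx.
  pose f := \row_i (ev 0 i * d 0 i * ev 0 i).
  have EDE : E *m diag_mx d *m E = diag_mx f.
    apply/matrixP => i j; rewrite mul_mx_diag mul_diag_mx !mxE.
    by case: eqP => [->|_]; rewrite ?mulr0 ?mul0r ?mulr1n.
  have HGH : H *m G *m H = Pr *m diag_mx f *m Pr^T + Pi *m diag_mx f *m Pi^T.
    by rewrite HG mulmxDl -!mulmxA PrH PiH -EDE !mulmxA.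
  have e1 : (A *m H *m x)^T *m (A *m H *m x) = x^T *m (H *m G *m H) *m x.
    by rewrite !trmx_mul Hsym /G !mulmxA.
  rewrite sqm_trE e1 HGH mulmxDr mulmxDl mxtraceD.
  have tr1 (P : 'M[R]_n) : x^T *m (P *m diag_mx f *m P^T) *m x
      = (P^T *m x)^T *m diag_mx f *m (P^T *m x).
    by rewrite trmx_mul trmxK !mulmxA.
  rewrite !tr1.
  have hf i : 0 <= f 0 i <= 1 by rewrite mxE; apply: ev_d_ev.
  apply: (le_trans (lerD (weighted _ hf) (weighted _ hf))).
  rewrite !sqm_trE !trmx_mul !trmxK -mxtraceD.
  by rewrite !mulmxA -(mulmxA x^T Pr) -(mulmxA x^T Pi) -mulmxDl -mulmxDr H1 mulmx1.
rewrite ipE trmx_mul Hsym -mulmxA -/G HG mxtraceD mxtrace_mulC.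
rewrite [\tr (Pi *m _ *m _)]mxtrace_mulC !mulmxA -mxtraceD -!mulmxDl H2 mul1mx.
rewrite mul_diag_mx /mxtrace.
by apply: eq_bigr => i _; rewrite -ev_d !mxE eqxx mulr1n.
Qed.

End Dual.

Lemma char_poly_conj (F : fieldType) n (P D : 'M[F]_n) : P \in unitmx ->
  char_poly (invmx P *m D *m P) = char_poly D.
Proof.
move=> Pu.
pose P' := map_mx (@polyC F) P.
have P'u : P' \in unitmx by rewrite map_unitmx.
have iP' : map_mx (@polyC F) (invmx P) = invmx P' by rewrite map_invmx.
rewrite /char_poly.
have -> : char_poly_mx (invmx P *m D *m P) = invmx P' *m char_poly_mx D *m P'.
  rewrite /char_poly_mx !map_mxM iP' mulmxBr mulmxBl.
  congr (_ - _); by rewrite scalar_mxC -mulmxA mulVmx // mulmx1.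
rewrite !det_mulmx mulrC mulrA -det_mulmx mulmxV // det1 mul1r //.
Qed.

Section Frame.
Local Open Scope sesquilinear_scope.
Variable R : realType.
Local Notation C := (R[i]).
Local Notation ReC := (@complex.Re R).
Local Notation ImC := (@complex.Im R).
Local Notation iota := (real_complex R).

Lemma ReC_M (x y : C) : ReC (x * y) = ReC x * ReC y - ImC x * ImC y.
Proof. by case: x => a b; case: y => c d. Qed.
Lemma ImC_M (x y : C) : ImC (x * y) = ReC x * ImC y + ImC x * ReC y.
Proof. by case: x => a b; case: y => c d. Qed.
Lemma ReC_D (x y : C) : ReC (x + y) = ReC x + ReC y.
Proof. by case: x => a b; case: y => c d. Qed.
Lemma ImC_D (x y : C) : ImC (x + y) = ImC x + ImC y.
Proof. by case: x => a b; case: y => c d. Qed.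
Lemma ReC_J (x : C) : ReC (x^*) = ReC x.
Proof. by case: x. Qed.
Lemma ImC_J (x : C) : ImC (x^*) = - ImC x.
Proof. by case: x. Qed.
Lemma ReC_sum I (r : seq I) (P : pred I) (F : I -> C) :
  ReC (\sum_(i <- r | P i) F i) = \sum_(i <- r | P i) ReC (F i).
Proof. exact: (big_morph _ ReC_D). Qed.
Lemma ImC_sum I (r : seq I) (P : pred I) (F : I -> C) :
  ImC (\sum_(i <- r | P i) F i) = \sum_(i <- r | P i) ImC (F i).
Proof. exact: (big_morph _ ImC_D). Qed.
Lemma ReC_nat (b : bool) : ReC (b%:R) = b%:R.
Proof. by case: b. Qed.

Lemma frame n (G : 'M[R]_n) : G^T = G ->
  exists Pr Pi : 'M[R]_n, exists d : 'rV[R]_n,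
  [/\ G *m Pr = Pr *m diag_mx d, G *m Pi = Pi *m diag_mx d,
      Pr *m Pr^T + Pi *m Pi^T = 1%:M,
      Pr^T *m Pr + Pi^T *m Pi = 1%:M &
      char_poly G = \prod_(i < n) ('X - (d 0 i)%:P)].
Proof.
move=> Gsym.
pose Gc := map_mx iota G.
have Gh : Gc \is hermsymmx.
  apply/is_hermitianmxP; rewrite expr0 scale1r; apply/matrixP => i j.
  by rewrite !mxE -[in LHS]Gsym mxE; apply/esym/conjc_real.
have HP : Gc = invmx (spectralmx Gc) *m diag_mx (spectral_diag Gc) *m spectralmx Gc
  by exact/orthomx_spectralP/hermitian_normalmx.
have Preal := hermitian_spectral_diag_real Gh.
set P := spectralmx Gc in HP; set dc := spectral_diag Gc in HP Preal.
have Pu : P \is unitarymx by exact: spectral_unitarymx.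
have PPt : P *m P^t* = 1%:M by apply/unitarymxP.
have Pinv : invmx P = P^t* by exact: invmx_unitary.
have PtP : P^t* *m P = 1%:M by rewrite -Pinv mulVmx // unitarymx_unit.
have dreal : forall j, dc 0 j = iota (ReC (dc 0 j)).
  move=> j; have := mxOverP Preal 0 j.
  by case: (dc 0 j) => a b; rewrite complex_real => /eqP ->.
pose d := map_mx ReC dc.
have CP : char_poly G = \prod_(i < n) ('X - (d 0 i)%:P).
  apply: (@map_poly_inj _ _ iota).
  rewrite map_char_poly -/Gc HP char_poly_conj ?unitarymx_unit //.
  rewrite char_poly_trig ?diag_mx_is_trig // rmorph_prod; apply: eq_bigr => i _.
  by rewrite /= map_polyXsubC !mxE eqxx mulr1n {1}[dc 0 i]dreal.
have E1 : Gc *m P^t* = P^t* *m diag_mx dc.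
  by rewrite {1}HP Pinv -!mulmxA PPt mulmx1.
have E2 : (P^t*)^t* *m P^t* = 1%:M by rewrite trmxCK.
have E3 : P^t* *m (P^t*)^t* = 1%:M by rewrite trmxCK.
move: (P^t*) E1 E2 E3 => W E1 E2 E3.
exists (map_mx ReC W), (map_mx ImC W), d; split => //.
- apply/matrixP => i j; rewrite mul_mx_diag !mxE.
  have := congr1 (fun M : 'M[C]_n => ReC (M i j)) E1; rewrite /= mul_mx_diag !mxE.
  rewrite ReC_sum [dc 0 j]dreal ReC_M /= mulr0 subr0 => <-.
  by apply: eq_bigr => k _; rewrite !mxE ReC_M /= mul0r subr0.
- apply/matrixP => i j; rewrite mul_mx_diag !mxE.
  have := congr1 (fun M : 'M[C]_n => ImC (M i j)) E1; rewrite /= mul_mx_diag !mxE.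
  rewrite ImC_sum [dc 0 j]dreal ImC_M /= mulr0 add0r => <-.
  by apply: eq_bigr => k _; rewrite !mxE ImC_M /= mul0r addr0.
- apply/matrixP => i j.
  have := congr1 (fun M : 'M[C]_n => ReC (M i j)) E3.
  rewrite !mxE ReC_sum ReC_nat => <-.
  rewrite -big_split /=; apply: eq_bigr => k _; rewrite !mxE ReC_M ReC_J ImC_J.
  by rewrite mulrN opprK.
- apply/matrixP => i j.
  have := congr1 (fun M : 'M[C]_n => ReC (M i j)) E2.
  rewrite !mxE ReC_sum ReC_nat => <-.
  rewrite -big_split /=; apply: eq_bigr => k _; rewrite !mxE ReC_M ReC_J ImC_J.
  by rewrite mulNr opprK.
Qed.
End Frame.

Section Nuc.
Variable R : realType.

Lemma nuc_data m n (A : 'M[R]_(m, n)) : exists Pr Pi : 'M[R]_n, exists d : 'rV[R]_n,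
  [/\ (A^T *m A) *m Pr = Pr *m diag_mx d, (A^T *m A) *m Pi = Pi *m diag_mx d,
      Pr *m Pr^T + Pi *m Pi^T = 1%:M, Pr^T *m Pr + Pi^T *m Pi = 1%:M &
      nuc_norm A = \sum_i Num.sqrt (d 0 i)].
Proof.
have Gs : (A^T *m A)^T = A^T *m A by rewrite trmx_mul trmxK.
have [Pr [Pi [d [h1 h2 h3 h4 cp]]]] := frame Gs.
exists Pr, Pi, d; split => //.
pose s0 := [seq d 0 i | i <- enum 'I_n].
have Ps0 : char_poly (A^T *m A) = \prod_(r <- s0) ('X - r%:P).
  by rewrite big_map big_enum.
have Hg : char_poly (A^T *m A) = \prod_(r <- gram_eigenvalues A) ('X - r%:P).
  exact: (@xgetI _ [::] (fun s : seq R => char_poly (A^T *m A) = \prod_(r <- s) ('X - r%:P)) s0 Ps0).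
have pe : perm_eq (gram_eigenvalues A) s0 by apply: prod_XsubC_eq; rewrite -Hg.
rewrite /nuc_norm /singular_values big_map (perm_big _ pe) big_map big_enum //.
Qed.

Lemma nuc_le m n (A Q : 'M[R]_(m, n)) : contr Q -> ip Q A <= nuc_norm A.
Proof.
have [Pr [Pi [d [h1 h2 h3 h4 ->]]]] := nuc_data A.
by move=> cQ; apply: (@dual_le R m n A Pr Pi d).
Qed.

Lemma nuc_att m n (A : 'M[R]_(m, n)) : exists Q, contr Q /\ ip Q A = nuc_norm A.
Proof.
have [Pr [Pi [d [h1 h2 h3 h4 ->]]]] := nuc_data A.
exact: (@dual_att R m n A Pr Pi d).
Qed.

Lemma nuc_mulr m k n (A : 'M[R]_(m, k)) (M : 'M[R]_(k, n)) :
  contr M^T -> nuc_norm (A *m M) <= nuc_norm A.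
Proof.
move=> cM; have [Q [cQ <-]] := nuc_att (A *m M).
rewrite ip_mulr; apply: nuc_le => x.
rewrite -mulmxA; apply: le_trans (cQ _) (cM _).
Qed.

Lemma nuc_mid m n (S1 S2 : 'M[R]_(m, n)) :
  nuc_norm (2^-1 *: (S1 + S2)) <= 2^-1 * (nuc_norm S1 + nuc_norm S2).
Proof.
have [Q [cQ <-]] := nuc_att (2^-1 *: (S1 + S2)).
rewrite ipZr ipDr; apply: ler_wpM2l; first by rewrite invr_ge0 ler0n.
by apply: lerD; apply: nuc_le.
Qed.

Lemma frobE m n (A : 'M[R]_(m, n)) : frob_norm A ^+ 2 = sqm A.
Proof. by rewrite /frob_norm sqr_sqrtr // sqm_ge0. Qed.

Lemma cYt q n (Y : 'M[R]_(q, n)) : Y^T *m Y = 1%:M -> contr Y^T.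
Proof.
move=> HY x; rewrite !sqm_trE.
set z := Y^T *m x.
have e : (x - Y *m z)^T *m (x - Y *m z) = x^T *m x - z^T *m z.
  have zT : z^T = x^T *m Y by rewrite /z trmx_mul trmxK.
  have tB : (x - Y *m z)^T = x^T - z^T *m Y^T.
    by rewrite -trmx_mul; apply/matrixP => i j; rewrite !mxE.
  rewrite tB mulmxBl !mulmxBr.
  have e1 : z^T *m Y^T *m (Y *m z) = z^T *m z.
    by rewrite -mulmxA (mulmxA Y^T) HY mul1mx.
  have e2 : x^T *m (Y *m z) = z^T *m z by rewrite zT mulmxA.
  have e3 : z^T *m Y^T *m x = z^T *m z by rewrite -mulmxA.
  by rewrite e1 e2 e3 subrr subr0.
have := sqm_ge0 (x - Y *m z); rewrite sqm_trE e linearB /=.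
by rewrite subr_ge0.
Qed.

End Nuc.

Theorem proposition5 (R : realType) (m n q : nat)
  (X : 'M[R]_(m, n)) (Y : 'M[R]_(q, n)) (lambda : R)
  (HY : Y^T *m Y = 1%:M) (Hlambda : 0 < lambda)
  (Bhat : 'M[R]_(m, q)) (Shat : 'M[R]_(m, n))
  (HB : is_minimizer
          (fun B : 'M[R]_(m, q) =>
             2^-1 * frob_norm (X - B *m Y) ^+ 2 + lambda * nuc_norm B) Bhat)
  (HS : is_minimizer
          (fun S : 'M[R]_(m, n) =>
             2^-1 * frob_norm (X - S) ^+ 2 + lambda * nuc_norm S) Shat) :
  Shat = Bhat *m Y.
Proof.
have cY : contr (Y^T)^T.
  by move=> x; rewrite trmxK !sqm_trE trmx_mul -mulmxA (mulmxA Y^T) HY mul1mx.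
have cYt : contr Y^T := cYt HY.
set f := fun S : 'M[R]_(m, n) => 2^-1 * sqm (X - S) + lambda * nuc_norm S.
have HS' : forall S, f Shat <= f S.
  by move=> S; have := HS S; rewrite /f /= !frobE.
have fS : forall S, f S <= f Shat -> S = Shat.
  move=> S hS.
  have hM := HS' (2^-1 *: (S + Shat)).
  have par : sqm (X - 2^-1 *: (S + Shat)) = 2^-1 * sqm (X - S) + 2^-1 * sqm (X - Shat)
      + (- (2^-1 * 2^-1)) * sqm (S - Shat).
    by apply: sum_lin3 => i j; rewrite !mxE; field.
  have nM := nuc_mid S Shat.
  have lM : lambda * nuc_norm (2^-1 *: (S + Shat)) <=
      2^-1 * (lambda * nuc_norm S) + 2^-1 * (lambda * nuc_norm Shat).
    rewrite -!mulrDr mulrCA; apply: ler_wpM2l => //; exact: ltW.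
  move: hS hM; rewrite /f /= par.
  have c0 := sqm_ge0 (S - Shat).
  move: lM c0.
  set a := sqm (X - S); set b := sqm (X - Shat); set c := sqm (S - Shat).
  set u := lambda * nuc_norm S; set v := lambda * nuc_norm Shat.
  set w := lambda * _.
  move=> lM c0 hS hM.
  have c00 : c = 0 by lra.
  by apply/eqP; rewrite -subr_eq0; apply/eqP/sqm_eq0.
symmetry; apply: fS.
have h1 : f (Bhat *m Y) <= 2^-1 * frob_norm (X - Bhat *m Y) ^+ 2 + lambda * nuc_norm Bhat.
  rewrite /f /= frobE lerD2l; apply: ler_wpM2l; first exact: ltW.
  exact: nuc_mulr.
apply: (le_trans h1); apply: (le_trans (HB (Shat *m Y^T))).
rewrite -mulmxA HY mulmx1 /f /= frobE lerD2l; apply: ler_wpM2l; first exact: ltW.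
exact: nuc_mulr.
Qed.
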